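(* For all integers $m\geq 2$: (i) if $-\frac12<\lambda\leq 0$, then $$\widetilde A_{2,m}\geq\frac{(m-1)m(m+\lambda)(m+\lambda+1)\big(m^2+\lambda m-\frac12\big)\big(m^2+\lambda m-\frac{\lambda}{3}-\frac72\big)}{2(2\lambda+1)(2\lambda+5)};$$ (ii) if $\lambda\geq 0$, then $$\widetilde A_{2,m}\geq\frac{(m-1)m(m+\lambda)(m+\lambda+1)\big(m^2+\lambda m-\frac12\big)\big(m^2+\lambda m-\frac{\lambda}{2}-\frac72\big)}{2(2\lambda+1)(2\lambda+5)};$$ and for every $\lambda>-\frac12$, $$\widetilde A_{2,m}\leq\frac{(m-1)m^2(m+\lambda)^2(m+\lambda+1)\big(m^2+\lambda m-\frac12\big)}{2(2\lambda+1)(2\lambda+5)}.$$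
   Context: Fix $\lambda>-1/2$. Define $\widetilde Q_m$ by $\widetilde Q_0=1$, $\widetilde Q_1(\mu)=1-\frac{\lambda+1}{2}\mu$ and, for $m\geq2$, $$\widetilde Q_m-\widetilde Q_{m-1}=\frac{(m-1)(2m-1)(2m-1+\lambda)}{(m-1+\lambda)(2m-3+\lambda)(2m-3+2\lambda)}\big[\widetilde Q_{m-1}-\widetilde Q_{m-2}\big]-\frac{(2m-1)(2m-2+\lambda)(2m-1+\lambda)}{2(m-1+\lambda)}\,\mu\,\widetilde Q_{m-1}(\mu).$$ Write $\widetilde Q_m(\mu)=\sum_{i=0}^m(-1)^i\widetilde A_{i,m}\mu^i$; thus $\widetilde A_{2,m}$ is the coefficient of $\mu^2$ in $\widetilde Q_m$. *)

(* Defs.v *)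
(* lambda ranges over an arbitrary real field R;
   the polynomials Q~_m live in {poly R} with indeterminate 'X = mu. *)
From mathcomp Require Import all_boot all_order all_algebra.
Set Implicit Arguments. Unset Strict Implicit. Unset Printing Implicit Defensive.
Import Order.TTheory GRing.Theory Num.Theory.
Local Open Scope ring_scope.

Definition Qcoef1 {R : realFieldType} (l : R) (m : nat) : R :=
  let m' := m%:R in
  ((m' - 1) * (2 * m' - 1) * (2 * m' - 1 + l)) /
  ((m' - 1 + l) * (2 * m' - 3 + l) * (2 * m' - 3 + 2 * l)).

Definition Qcoef2 {R : realFieldType} (l : R) (m : nat) : R :=
  let m' := m%:R in
  ((2 * m' - 1) * (2 * m' - 2 + l) * (2 * m' - 1 + l)) / (2 * (m' - 1 + l)).

Fixpoint Qt {R : realFieldType} (l : R) (n : nat) {struct n} : {poly R} :=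
  match n with
  | 0 => 1
  | n'.+1 =>
    match n' with
    | 0 => 1 - ((l + 1) / 2) *: 'X
    | k.+1 =>
      (* n = k.+2 =: m, n' = m - 1, k = m - 2 *)
      Qt l n' + Qcoef1 l n *: (Qt l n' - Qt l k) - Qcoef2 l n *: ('X * Qt l n')
    end
  end.

Definition At {R : realFieldType} (l : R) (i m : nat) : R :=
  (-1) ^+ i * (Qt l m)`_i.

(* Main.v *)
Require Import Defs.
From mathcomp Require Import all_boot all_order all_algebra.
From mathcomp Require Import ring lra.
Set Implicit Arguments. Unset Strict Implicit. Unset Printing Implicit Defensive.
Import Order.TTheory GRing.Theory Num.Theory.
Local Open Scope ring_scope.

Definition C1 {R : realFieldType} (l x : R) : R :=
  ((x + 2 - 1) * (2 * (x + 2) - 1) * (2 * (x + 2) - 1 + l)) /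
  ((x + 2 - 1 + l) * (2 * (x + 2) - 3 + l) * (2 * (x + 2) - 3 + 2 * l)).
Definition C2 {R : realFieldType} (l x : R) : R :=
  ((2 * (x + 2) - 1) * (2 * (x + 2) - 2 + l) * (2 * (x + 2) - 1 + l)) / (2 * (x + 2 - 1 + l)).
Definition a1 {R : realFieldType} (l M : R) : R :=
  M * (M + l) * (M ^+ 2 + l * M - 1 / 2) / (2 * l + 1).
Definition FL3 {R : realFieldType} (l M : R) : R :=
  (M - 1) * M * (M + l) * (M + l + 1) * (M ^+ 2 + l * M - 1 / 2)
       * (M ^+ 2 + l * M - l / 3 - 7 / 2) / (2 * (2 * l + 1) * (2 * l + 5)).
Definition FL2 {R : realFieldType} (l M : R) : R :=
  (M - 1) * M * (M + l) * (M + l + 1) * (M ^+ 2 + l * M - 1 / 2)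
       * (M ^+ 2 + l * M - l / 2 - 7 / 2) / (2 * (2 * l + 1) * (2 * l + 5)).
Definition FU {R : realFieldType} (l M : R) : R :=
  (M - 1) * M ^+ 2 * (M + l) ^+ 2 * (M + l + 1) * (M ^+ 2 + l * M - 1 / 2) / (2 * (2 * l + 1) * (2 * l + 5)).
Definition GL2 {R : realFieldType} (x s : R) : R := 48%:R * x ^+ 0 * s ^+ 0 + 298%:R * x ^+ 0 * s ^+ 1 + 727%:R * x ^+ 0 * s ^+ 2 + 889%:R * x ^+ 0 * s ^+ 3 + 571%:R * x ^+ 0 * s ^+ 4 + 181%:R * x ^+ 0 * s ^+ 5 + 22%:R * x ^+ 0 * s ^+ 6 + 368%:R * x ^+ 1 * s ^+ 0 + 2058%:R * x ^+ 1 * s ^+ 1 + 4362%:R * x ^+ 1 * s ^+ 2 + 4468%:R * x ^+ 1 * s ^+ 3 + 2315%:R * x ^+ 1 * s ^+ 4 + 576%:R * x ^+ 1 * s ^+ 5 + 59%:R * x ^+ 1 * s ^+ 6 + 2%:R * x ^+ 1 * s ^+ 7 + 1184%:R * x ^+ 2 * s ^+ 0 + 5932%:R * x ^+ 2 * s ^+ 1 + 10724%:R * x ^+ 2 * s ^+ 2 + 8933%:R * x ^+ 2 * s ^+ 3 + 3579%:R * x ^+ 2 * s ^+ 4 + 661%:R * x ^+ 2 * s ^+ 5 + 53%:R * x ^+ 2 * s ^+ 6 + 2%:R * x ^+ 2 * s ^+ 7 + 2080%:R * x ^+ 3 * s ^+ 0 + 9260%:R * x ^+ 3 * s ^+ 1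 + 13866%:R * x ^+ 3 * s ^+ 2 + 8948%:R * x ^+ 3 * s ^+ 3 + 2574%:R * x ^+ 3 * s ^+ 4 + 316%:R * x ^+ 3 * s ^+ 5 + 16%:R * x ^+ 3 * s ^+ 6 + 2160%:R * x ^+ 4 * s ^+ 0 + 8450%:R * x ^+ 4 * s ^+ 1 + 9985%:R * x ^+ 4 * s ^+ 2 + 4580%:R * x ^+ 4 * s ^+ 3 + 815%:R * x ^+ 4 * s ^+ 4 + 50%:R * x ^+ 4 * s ^+ 5 + 1328%:R * x ^+ 5 * s ^+ 0 + 4498%:R * x ^+ 5 * s ^+ 1 + 3836%:R * x ^+ 5 * s ^+ 2 + 1042%:R * x ^+ 5 * s ^+ 3 + 76%:R * x ^+ 5 * s ^+ 4 + 448%:R * x ^+ 6 * s ^+ 0 + 1288%:R * x ^+ 6 * s ^+ 1 + 644%:R * x ^+ 6 * s ^+ 2 + 56%:R * x ^+ 6 * s ^+ 3 + 64%:R * x ^+ 7 * s ^+ 0 + 152%:R * x ^+ 7 * s ^+ 1 + 16%:R * x ^+ 7 * s ^+ 2.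
Definition GU {R : realFieldType} (x s : R) : R := 450%:R * x ^+ 0 * s ^+ 1 + 2580%:R * x ^+ 0 * s ^+ 2 + 5420%:R * x ^+ 0 * s ^+ 3 + 5264%:R * x ^+ 0 * s ^+ 4 + 2592%:R * x ^+ 0 * s ^+ 5 + 640%:R * x ^+ 0 * s ^+ 6 + 64%:R * x ^+ 0 * s ^+ 7 + 450%:R * x ^+ 1 * s ^+ 0 + 7005%:R * x ^+ 1 * s ^+ 1 + 24831%:R * x ^+ 1 * s ^+ 2 + 35518%:R * x ^+ 1 * s ^+ 3 + 24552%:R * x ^+ 1 * s ^+ 4 + 8736%:R * x ^+ 1 * s ^+ 5 + 1520%:R * x ^+ 1 * s ^+ 6 + 96%:R * x ^+ 1 * s ^+ 7 + 4410%:R * x ^+ 2 * s ^+ 0 + 35727%:R * x ^+ 2 * s ^+ 1 + 84159%:R * x ^+ 2 * s ^+ 2 + 84506%:R * x ^+ 2 * s ^+ 3 + 41800%:R * x ^+ 2 * s ^+ 4 + 10400%:R * x ^+ 2 * s ^+ 5 + 1136%:R * x ^+ 2 * s ^+ 6 + 32%:R * x ^+ 2 * s ^+ 7 + 16240%:R * x ^+ 3 * s ^+ 0 + 83448%:R * x ^+ 3 * s ^+ 1 + 134600%:R * x ^+ 3 * s ^+ 2 + 94896%:R * x ^+ 3 * s ^+ 3 + 32416%:R * x ^+ 3 * s ^+ 4 + 5056%:R * x ^+ 3 * s ^+ 5 + 256%:R * x ^+ 3 * s ^+ 6 + 29400%:R * x ^+ 4 * s ^+ 0 + 100180%:R * x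 ^+ 4 * s ^+ 1 + 110180%:R * x ^+ 4 * s ^+ 2 + 52520%:R * x ^+ 4 * s ^+ 3 + 11120%:R * x ^+ 4 * s ^+ 4 + 800%:R * x ^+ 4 * s ^+ 5 + 28000%:R * x ^+ 5 * s ^+ 0 + 62480%:R * x ^+ 5 * s ^+ 1 + 44848%:R * x ^+ 5 * s ^+ 2 + 12928%:R * x ^+ 5 * s ^+ 3 + 1216%:R * x ^+ 5 * s ^+ 4 + 13440%:R * x ^+ 6 * s ^+ 0 + 18368%:R * x ^+ 6 * s ^+ 1 + 7616%:R * x ^+ 6 * s ^+ 2 + 896%:R * x ^+ 6 * s ^+ 3 + 2560%:R * x ^+ 7 * s ^+ 0 + 1792%:R * x ^+ 7 * s ^+ 1 + 256%:R * x ^+ 7 * s ^+ 2.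
Definition GL3a {R : realFieldType} (x s : R) : R := 75%:R * x ^+ 0 * s ^+ 1 + 605%:R * x ^+ 0 * s ^+ 2 + 1750%:R * x ^+ 0 * s ^+ 3 + 2168%:R * x ^+ 0 * s ^+ 4 + 1024%:R * x ^+ 0 * s ^+ 5 + 64%:R * x ^+ 0 * s ^+ 6 + 955%:R * x ^+ 1 * s ^+ 1 + 6083%:R * x ^+ 1 * s ^+ 2 + 13062%:R * x ^+ 1 * s ^+ 3 + 10984%:R * x ^+ 1 * s ^+ 4 + 3136%:R * x ^+ 1 * s ^+ 5 + 32%:R * x ^+ 1 * s ^+ 6 + 4896%:R * x ^+ 2 * s ^+ 1 + 23694%:R * x ^+ 2 * s ^+ 2 + 36096%:R * x ^+ 2 * s ^+ 3 + 19664%:R * x ^+ 2 * s ^+ 4 + 3056%:R * x ^+ 2 * s ^+ 5 + 13144%:R * x ^+ 3 * s ^+ 1 + 46168%:R * x ^+ 3 * s ^+ 2 + 47024%:R * x ^+ 3 * s ^+ 3 + 15008%:R * x ^+ 3 * s ^+ 4 + 960%:R * x ^+ 3 * s ^+ 5 + 20040%:R * x ^+ 4 * s ^+ 1 + 47920%:R * x ^+ 4 * s ^+ 2 + 29280%:R * x ^+ 4 * s ^+ 3 + 4160%:R * x ^+ 4 * s ^+ 4 + 17440%:R * x ^+ 5 * s ^+ 1 + 25344%:R * x ^+ 5 * s ^+ 2 + 7040%:R * x ^+ 5 * s ^+ 3 + 8064%:R * x ^+ 6 * s ^+ 1 + 5376%:R * x ^+ 6 * s ^+ 2 + 1536%:R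 * x ^+ 7 * s ^+ 1.
Definition GL3b {R : realFieldType} (x s : R) : R := 32%:R * x ^+ 0 * s ^+ 6 + 32%:R * x ^+ 1 * s ^+ 6 + 32%:R * x ^+ 2 * s ^+ 5.
Ltac nz := repeat (apply/andP; split); apply/eqP => ?; lra.
Ltac pos := repeat match goal with
  | H : is_true (0 <= ?a) |- is_true (0 <= ?a) => exact H
  | |- is_true (0 <= _ + _) => apply: addr_ge0
  | |- is_true (0 <= _ * _) => apply: mulr_ge0
  | |- is_true (0 <= _ ^+ _) => apply: exprn_ge0
  | |- is_true (0 <= _%:R) => apply: ler0n
  end; try assumption.

Lemma GL2_ge0 (R : realFieldType) (x s : R) : 0 <= x -> 0 <= s -> 0 <= GL2 x s.
Proof. move=> hx hs; rewrite /GL2; pos. Qed.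

Lemma key_L2 (R : realFieldType) (l x : R) : 0 <= l -> 0 <= x ->
  FL2 l (x + 2) - FL2 l (x + 1) <= C1 l x * (FL2 l (x + 1) - FL2 l x) + C2 l x * a1 l (x + 1).
Proof.
move=> hl hx; rewrite -subr_ge0.
have -> : C1 l x * (FL2 l (x + 1) - FL2 l x) + C2 l x * a1 l (x + 1) - (FL2 l (x + 2) - FL2 l (x + 1))
  = GL2 x l / (2 * ((x + 1 + l) * (2 * x + 1 + l) * (2 * x + 1 + 2 * l)) * (2 * (2 * l + 1) * (2 * l + 5))).
  rewrite /C1 /C2 /a1 /FL2 /GL2. field; nz.
have h1 : 0 <= x + 1 + l by lra.
have h2 : 0 <= 2 * x + 1 + l by lra.
have h3 : 0 <= 2 * x + 1 + 2 * l by lra.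
have h4 : 0 <= 2 * l + 1 by lra.
have h5 : 0 <= 2 * l + 5 by lra.
apply: divr_ge0; first exact: GL2_ge0.
pos.
Qed.

Lemma GU_ge0 (R : realFieldType) (x s : R) : 0 <= x -> 0 <= s -> 0 <= GU x s.
Proof. move=> hx hs; rewrite /GU; pos. Qed.
Lemma GL3a_ge0 (R : realFieldType) (x s : R) : 0 <= x -> 0 <= s -> 0 <= GL3a x s.
Proof. move=> hx hs; rewrite /GL3a; pos. Qed.
Lemma GL3b_ge0 (R : realFieldType) (x s : R) : 0 <= x -> 0 <= s -> 0 <= GL3b x s.
Proof. move=> hx hs; rewrite /GL3b; pos. Qed.

Lemma key_U (R : realFieldType) (l x : R) : - (1/2) < l -> 0 <= x ->
  C1 l x * (FU l (x + 1) - FU l x) + C2 l x * a1 l (x + 1) <= FU l (x + 2) - FU l (x + 1).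
Proof.
move=> hl hx; rewrite -subr_ge0.
have -> : (FU l (x + 2) - FU l (x + 1)) - (C1 l x * (FU l (x + 1) - FU l x) + C2 l x * a1 l (x + 1))
  = GU x (l + 1/2) / (16%:R * ((x + 1 + l) * (2 * x + 1 + l) * (2 * x + 1 + 2 * l)) * (2 * (2 * l + 1) * (2 * l + 5))).
  rewrite /C1 /C2 /a1 /FU /GU. field; nz.
have h1 : 0 <= x + 1 + l by lra.
have h2 : 0 <= 2 * x + 1 + l by lra.
have h3 : 0 <= 2 * x + 1 + 2 * l by lra.
have h4 : 0 <= 2 * l + 1 by lra.
have h5 : 0 <= 2 * l + 5 by lra.
apply: divr_ge0; first by apply: GU_ge0 => //; lra.
pos.
Qed.

Lemma key_L3 (R : realFieldType) (l x : R) : - (1/2) < l -> l <= 0 -> 0 <= x ->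
  FL3 l (x + 2) - FL3 l (x + 1) <= C1 l x * (FL3 l (x + 1) - FL3 l x) + C2 l x * a1 l (x + 1).
Proof.
move=> hl hl0 hx; rewrite -subr_ge0.
have -> : C1 l x * (FL3 l (x + 1) - FL3 l x) + C2 l x * a1 l (x + 1) - (FL3 l (x + 2) - FL3 l (x + 1))
  = (GL3a x (l + 1/2) + (- l) * GL3b x (l + 1/2)) / (24%:R * ((x + 1 + l) * (2 * x + 1 + l) * (2 * x + 1 + 2 * l)) * (2 * (2 * l + 1) * (2 * l + 5))).
  rewrite /C1 /C2 /a1 /FL3 /GL3a /GL3b. field; nz.
have h1 : 0 <= x + 1 + l by lra.
have h2 : 0 <= 2 * x + 1 + l by lra.
have h3 : 0 <= 2 * x + 1 + 2 * l by lra.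
have h4 : 0 <= 2 * l + 1 by lra.
have h5 : 0 <= 2 * l + 5 by lra.
have h6 : 0 <= - l by lra.
have h7 : 0 <= l + 1/2 by lra.
apply: divr_ge0; last by pos.
apply: addr_ge0; first exact: GL3a_ge0.
apply: mulr_ge0 => //; exact: GL3b_ge0.
Qed.

Lemma ind_bound (R : realFieldType) (c g u f : nat -> R) :
  (forall m, 0 <= c m) ->
  u 0%N = 0 -> u 1%N = 0 -> f 0%N = 0 -> f 1%N = 0 ->
  (forall m, u m.+2 - u m.+1 = c m * (u m.+1 - u m) + g m) ->
  (forall m, f m.+2 - f m.+1 <= c m * (f m.+1 - f m) + g m) ->
  forall m, f m <= u m.
Proof.
move=> hc u0 u1 f0 f1 hu hf.
have hd : forall m, f m.+1 - f m <= u m.+1 - u m.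
  elim=> [|m IH]; first by rewrite u0 u1 f0 f1.
  apply: (le_trans (hf m)); rewrite hu lerD2r.
  exact: ler_wpM2l.
elim=> [|m IH]; first by rewrite u0 f0.
have := hd m; lra.
Qed.



Lemma QtSS (R : realFieldType) (l : R) m : Qt l m.+2 = Qt l m.+1 + Qcoef1 l m.+2 *: (Qt l m.+1 - Qt l m)
   - Qcoef2 l m.+2 *: ('X * Qt l m.+1).
Proof. by []. Qed.

Lemma Qcoef1E (R : realFieldType) (l : R) m : Qcoef1 l m.+2 = C1 l m%:R.
Proof. rewrite /Qcoef1 /C1 /=. have -> : (m.+2)%:R = m%:R + 2 :> R by rewrite -addn2 natrD. by []. Qed.
Lemma Qcoef2E (R : realFieldType) (l : R) m : Qcoef2 l m.+2 = C2 l m%:R.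
Proof. rewrite /Qcoef2 /C2 /=. have -> : (m.+2)%:R = m%:R + 2 :> R by rewrite -addn2 natrD. by []. Qed.

Lemma coefSS (R : realFieldType) (l : R) m i : (Qt l m.+2)`_i.+1 = (Qt l m.+1)`_i.+1
   + C1 l m%:R * ((Qt l m.+1)`_i.+1 - (Qt l m)`_i.+1) - C2 l m%:R * (Qt l m.+1)`_i.
Proof. by rewrite QtSS coefB coefD !coefZ coefB coefXM -Qcoef1E -Qcoef2E. Qed.
Lemma coefSS0 (R : realFieldType) (l : R) m : (Qt l m.+2)`_0 = (Qt l m.+1)`_0
   + C1 l m%:R * ((Qt l m.+1)`_0 - (Qt l m)`_0).
Proof. by rewrite QtSS coefB coefD !coefZ coefB coefXM -Qcoef1E mulr0 subr0. Qed.

Lemma C1_ge0 (R : realFieldType) (l : R) (hl : - (1/2) < l) (x : R) : 0 <= x -> 0 <= C1 l x.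
Proof.
move=> hx; rewrite /C1.
have h1 : 0 <= x + 2 - 1 + l by lra.
have h2 : 0 <= 2 * (x + 2) - 3 + l by lra.
have h3 : 0 <= 2 * (x + 2) - 3 + 2 * l by lra.
have h4 : 0 <= x + 2 - 1 by lra.
have h5 : 0 <= 2 * (x + 2) - 1 by lra.
have h6 : 0 <= 2 * (x + 2) - 1 + l by lra.
apply: divr_ge0; pos.
Qed.

Lemma q01 (R : realFieldType) (l : R) (hl : - (1/2) < l) m : (Qt l m)`_0 = 1 /\ (Qt l m)`_1 = - a1 l m%:R.
Proof.
suff : ((Qt l m)`_0 = 1 /\ (Qt l m)`_1 = - a1 l m%:R) /\
       ((Qt l m.+1)`_0 = 1 /\ (Qt l m.+1)`_1 = - a1 l m.+1%:R) by case.
elim: m => [|m [[IH0 IH1] [IH0' IH1']]].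
  split.
    by split; rewrite coef1 // /a1 !mul0r oppr0.
  rewrite /= !coefB !coef1 !coefZ !coefX /= mulr0 subr0 mulr1 sub0r; split => //.
  congr (- _); rewrite /a1; field; nz.
split; first by split.
rewrite coefSS0 coefSS IH0 IH1 IH0' IH1' subrr mulr0 addr0; split => //.
have e1 : (m.+1)%:R = m%:R + 1 :> R by rewrite -addn1 natrD.
have e2 : (m.+2)%:R = m%:R + 2 :> R by rewrite -addn2 natrD.
rewrite e2 e1 mulr1.
have hx : 0 <= m%:R :> R by [].
rewrite /C1 /C2 /a1; field; nz.
Qed.

Lemma q2rec (R : realFieldType) (l : R) (hl : - (1/2) < l) m : (Qt l m.+2)`_2 - (Qt l m.+1)`_2
   = C1 l m%:R * ((Qt l m.+1)`_2 - (Qt l m)`_2) + C2 l m%:R * a1 l (m%:R + 1).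
Proof.
have e1 : (m.+1)%:R = m%:R + 1 :> R by rewrite -addn1 natrD.
rewrite coefSS (proj2 (q01 hl m.+1)) e1; ring.
Qed.

Lemma q20 (R : realFieldType) (l : R) : (Qt l 0)`_2 = 0.
Proof. by rewrite coef1. Qed.
Lemma q21 (R : realFieldType) (l : R) : (Qt l 1)`_2 = 0.
Proof. by rewrite /= !coefB !coef1 !coefZ !coefX /= mulr0 subr0. Qed.


Theorem lemma3p6 (R : realFieldType) (l : R) (m : nat) :
  - (1 / 2) < l -> (2 <= m)%N ->
  let M := m%:R in
  let D := 2 * (2 * l + 1) * (2 * l + 5) in
  (l <= 0 ->
     (M - 1) * M * (M + l) * (M + l + 1) * (M ^+ 2 + l * M - 1 / 2)
       * (M ^+ 2 + l * M - l / 3 - 7 / 2) / D <= At l 2 m) /\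
  (0 <= l ->
     (M - 1) * M * (M + l) * (M + l + 1) * (M ^+ 2 + l * M - 1 / 2)
       * (M ^+ 2 + l * M - l / 2 - 7 / 2) / D <= At l 2 m) /\
  At l 2 m <=
     (M - 1) * M ^+ 2 * (M + l) ^+ 2 * (M + l + 1) * (M ^+ 2 + l * M - 1 / 2) / D.
Proof.
move=> hl hm M D.
have At2 : At l 2 m = (Qt l m)`_2 by rewrite /At sqrrN expr1n mul1r.
have e1 : forall n, (n.+1)%:R = n%:R + 1 :> R by move=> n; rewrite -addn1 natrD.
have e2 : forall n, (n.+2)%:R = n%:R + 2 :> R by move=> n; rewrite -addn2 natrD.
have main : forall f : nat -> R, f 0%N = 0 -> f 1%N = 0 ->
  (forall n, f n.+2 - f n.+1 <= C1 l n%:R * (f n.+1 - f n) + C2 l n%:R * a1 l (n%:R + 1)) ->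
  forall n, f n <= (Qt l n)`_2.
  move=> f f0 f1 hf.
  apply: (@ind_bound R (fun n => C1 l n%:R) (fun n => C2 l n%:R * a1 l (n%:R + 1))) => //.
  - by move=> n; apply: C1_ge0.
  - exact: q20.
  - exact: q21.
  - by move=> n; apply: q2rec.
rewrite At2; split; [|split].
- move=> hl0.
  apply: (main (fun n => FL3 l n%:R)) => [||n].
  + by rewrite /FL3 mulr0 !mul0r.
  + by rewrite /FL3 subrr !mul0r.
  + rewrite (e2 n) (e1 n); exact: key_L3.
- move=> hl0.
  apply: (main (fun n => FL2 l n%:R)) => [||n].
  + by rewrite /FL2 mulr0 !mul0r.
  + by rewrite /FL2 subrr !mul0r.
  + rewrite (e2 n) (e1 n); exact: key_L2.
- rewrite -lerN2.
  apply: (@ind_bound R (fun n => C1 l n%:R) (fun n => - (C2 l n%:R * a1 l (n%:R + 1)))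
     (fun n => - (Qt l n)`_2) (fun n => - FU l n%:R)) => [n|||||n|n].
  + by apply: C1_ge0.
  + by rewrite q20 oppr0.
  + by rewrite q21 oppr0.
  + by rewrite /FU expr0n /= mulr0 !mul0r oppr0.
  + by rewrite /FU subrr !mul0r oppr0.
  + have := q2rec hl n; lra.
  + rewrite (e2 n) (e1 n).
    have := key_U hl (ler0n R n); lra.
Qed.
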